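(* In the Byblos protocol described in the context, if a correct server decides to commit or to cancel a transaction, then every correct server eventually makes the same decision for that transaction.
   Context: Byblos protocol. There are $n=4f+1$ servers, at most $f$ Byzantine, the rest correct. Clients are not Byzantine (may crash). Messages between correct parties are eventually delivered, FIFO, authenticated; client messages are signed and unforgeable. Each correct server keeps sets $\mathit{committed}$, $\mathit{cancelled}$, $\mathit{resolving}$ among other state. A server decides to commit (resp. cancel) a transaction $T$ by adding it to $\mathit{committed}$ (resp. $\mathit{cancelled}$), which happens only as the outcome of a resolution of $T$: the server sends $\mathrm{StartResolution}(T,\mathit{code})$ to all servers and runs an off-the-shelf binary Byzantine consensus instance for $T$ with input $1$ (COMMIT) or $0$ (CANCEL); the consensus satisfies agreement (no two correct servers decide differently) and validity, and all correct servers participate in it (a correct server joins a resolution of $T$ upon receiving the client's Confirm for $T$, upon receiving $\mathrm{StartResolution}(T,\mathrm{COMMIT})$, upon receiving $\mathrm{StartResolution}(T,\mathrm{CANCEL})$ from $f+1$ distinct servers, or upon expiry of a timer for a pending set containing $T$); decision $1$ adds $T$ to $\mathit{committed}$ and decision $0$ adds $T$ to $\mathit{cancelled}$. *)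

(* Defs.v *)
From mathcomp Require Import all_boot.
Set Implicit Arguments. Unset Strict Implicit. Unset Printing Implicit Defensive.

(* Servers are 'I_(4*f+1), i.e. n = 4f+1.  Time is discrete (nat).
   Binary decisions: true = 1 = COMMIT, false = 0 = CANCEL. *)
Definition server (f : nat) := 'I_(4 * f + 1).

Record execution (f : nat) (Tx : Type) := Execution {
  correct   : pred (server f);
  committed : server f -> nat -> Tx -> bool;    (* T \in committed of s at time t *)
  cancelled : server f -> nat -> Tx -> bool;    (* T \in cancelled of s at time t *)
  joined    : server f -> nat -> Tx -> bool;    (* s has joined the resolution
                                                   (consensus instance) of T by time t *)
  cdecided  : server f -> nat -> Tx -> option bool
    (* output of the binary consensus instance for T at s by time t
       (None = not yet decided) *)
}.

Definition byblos_assumptions (f : nat) (Tx : Type) (E : execution f Tx) : Prop :=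
    (#|[pred s | ~~ correct E s]| <= f) /\
    (forall s t t' T d, t <= t' -> cdecided E s t T = Some d ->
                        cdecided E s t' T = Some d) /\
    (forall s t T d, cdecided E s t T = Some d -> joined E s t T) /\
    (forall s1 s2 t1 t2 T d1 d2, correct E s1 -> correct E s2 ->
        cdecided E s1 t1 T = Some d1 -> cdecided E s2 t2 T = Some d2 -> d1 = d2) /\
    (forall T, (forall s, correct E s -> exists t, joined E s t T) ->
        forall s, correct E s -> exists t d, cdecided E s t T = Some d) /\
    (forall T, (exists s t, correct E s /\ joined E s t T) ->
        forall s, correct E s -> exists t, joined E s t T) /\
    (forall s t T, correct E s ->
        committed E s t T = true <-> exists2 t', t' <= t & cdecided E s t' T = Some true) /\
    (forall s t T, correct E s ->
        cancelled E s t T = true <-> exists2 t', t' <= t & cdecided E s t' T = Some false).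

(* Main.v *)
Require Import Defs.
From mathcomp Require Import all_boot.

Theorem lemma6 (f : nat) (Tx : Type) (E : execution f Tx) (T : Tx) :
  byblos_assumptions E ->
  (forall s t, correct E s -> committed E s t T ->
     forall s', correct E s' -> exists t', committed E s' t' T) /\
  (forall s t, correct E s -> cancelled E s t T ->
     forall s', correct E s' -> exists t', cancelled E s' t' T).
Proof.
  move=> [_ [_ [Hj [Hag [Hterm [Hpart [Hcom Hcan]]]]]]].
  split.
  - move=> s t cs hc s' cs'.
    have [t1 _ hd] := (proj1 (Hcom s t T cs) hc).
    have hall := Hpart T (ex_intro _ s (ex_intro _ t1 (conj cs (Hj _ _ _ _ hd)))).
    have [t2 [d hd2]] := Hterm T hall s' cs'.
    have ed := Hag _ _ _ _ _ _ _ cs cs' hd hd2.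
    subst d. exists t2. apply/(proj2 (Hcom s' t2 T cs')). by exists t2.
  - move=> s t cs hc s' cs'.
    have [t1 _ hd] := (proj1 (Hcan s t T cs) hc).
    have hall := Hpart T (ex_intro _ s (ex_intro _ t1 (conj cs (Hj _ _ _ _ hd)))).
    have [t2 [d hd2]] := Hterm T hall s' cs'.
    have ed := Hag _ _ _ _ _ _ _ cs cs' hd hd2.
    subst d. exists t2. apply/(proj2 (Hcan s' t2 T cs')). by exists t2.
Qed.
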